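(* Let $\psi$ be a CNF formula with only positive literals, with clauses $C_1,\dots,C_m$ each consisting of three distinct variables, and variables $x_1,\dots,x_p$, in which every variable appears in at least $3$ clauses. Let $G$ be the graph constructed as follows: (1) for each variable $x_i$ create a cycle $D_i$ whose number of vertices equals the number of clauses containing $x_i$; (2) add a vertex $a$ adjacent to every vertex of all cycles $D_1,\dots,D_p$; (3) for each clause $\{x_i,x_j,x_k\}$ add a vertex $u_{ijk}$ adjacent to one vertex of each of $D_i,D_j,D_k$, choosing in each cycle a vertex not yet adjacent to any clause-vertex; (4) subdivide once every edge of the cycles $D_1,\dots,D_p$ and every edge incident to $a$. If $G$ has a $1/2$-shallow topological minor of density at least $\frac{5m}{2m+1}$, then $\psi$ has an assignment in which every clause contains exactly one true variable.
   Context: A graph $H$ is a $1/2$-shallow topological minor of $G$ if some graph obtained from $H$ by subdividing each edge at most once is isomorphic to a subgraph of $G$. The density of $H$ is $\|H\|/|H|$ (number of edges divided by number of vertices). *)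

(* Defs.v *)
From mathcomp Require Import all_boot all_order all_algebra.
Set Implicit Arguments. Unset Strict Implicit. Unset Printing Implicit Defensive.

Definition simple_graph (V : finType) (e : rel V) : Prop :=
  symmetric e /\ irreflexive e.

Definition nedges (V : finType) (e : rel V) : nat :=
  #|[set E : {set V} | [exists x, exists y, e x y && (E == [set x; y])]]|.

Definition density (V : finType) (e : rel V) : rat :=
  ((nedges e)%:R / #|V|%:R)%R.

(* H is a 1/2-shallow topological minor of G: some graph obtained from H by
   subdividing each edge at most once is isomorphic to a subgraph of G. *)
Definition half_shallow_top_minor (VH : finType) (eH : rel VH)
    (VG : finType) (eG : rel VG) : Prop :=
  exists (phi : VH -> VG) (rho : VH -> VH -> option VG),
    injective phi /\
    (forall x y, eH x y ->
       rho x y = rho y x /\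
       match rho x y with
       | None => eG (phi x) (phi y)
       | Some w => [/\ eG (phi x) w, eG w (phi y) & forall v, phi v != w]
       end) /\
    (forall x y x' y' w, eH x y -> eH x' y' ->
       rho x y = Some w -> rho x' y' = Some w ->
       (x = x' /\ y = y') \/ (x = y' /\ y = x')).

(* The cycle D_i has one vertex per clause containing x_i; the vertex of D_i
   labelled j is the one adjacent to the clause vertex u_j.  The cyclic order
   of D_i is given by a sequence ord i listing the clauses containing x_i;
   its successor function is path.next.
   Raw vertices:
     inl (inl tt)       : the apex a
     inl (inr j)        : the clause vertex u_j
     inr ((i,j), 0)     : the vertex of D_i labelled j
     inr ((i,j), 1)     : subdivision vertex of the cycle edge from (i,j) to
                          (i, next (ord i) j)
     inr ((i,j), 2)     : subdivision vertex of the edge a -- (i,j)        *)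

Definition raw_vertex (p m : nat) : finType :=
  ((unit + 'I_m) + (('I_p * 'I_m) * 'I_3))%type.

Definition valid_vertex (p m : nat) (C : 'I_m -> {set 'I_p})
    (x : raw_vertex p m) : bool :=
  match x with
  | inl _ => true
  | inr (q, _) => q.1 \in C q.2
  end.

Definition Gvertex (p m : nat) (C : 'I_m -> {set 'I_p}) : finType :=
  {x : raw_vertex p m | valid_vertex C x}.

Definition raw_adj0 (p m : nat) (ord : 'I_p -> seq 'I_m)
    (x y : raw_vertex p m) : bool :=
  match x, y with
  | inl (inl _), inr (_, k) => nat_of_ord k == 2
  | inl (inr j), inr (q, k) => (nat_of_ord k == 0) && (q.2 == j)
  | inr (q, k), inr (q', k') =>
      [&& nat_of_ord k == 2, nat_of_ord k' == 0 & q == q']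
      || [&& nat_of_ord k == 0, nat_of_ord k' == 1 & q == q']
      || [&& nat_of_ord k == 1, nat_of_ord k' == 0, q.1 == q'.1
            & q'.2 == next (ord q.1) q.2]
  | _, _ => false
  end.

Definition Gadj (p m : nat) (C : 'I_m -> {set 'I_p}) (ord : 'I_p -> seq 'I_m)
    : rel (Gvertex C) :=
  fun x y => raw_adj0 ord (val x) (val y) || raw_adj0 ord (val y) (val x).

(* Main.v *)
Require Import Defs.
From mathcomp Require Import all_boot all_order all_algebra zify.
Set Implicit Arguments. Unset Strict Implicit. Unset Printing Implicit Defensive.
Import Order.TTheory GRing.Theory Num.Theory.

Definition k0 : 'I_3 := @Ordinal 3 0 isT.
Definition k1 : 'I_3 := @Ordinal 3 1 isT.
Definition k2 : 'I_3 := @Ordinal 3 2 isT.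

Lemma inr_eq (A B : eqType) (x y : B) : (@inr A B x == inr y) = (x == y).
Proof. by apply/eqP/eqP => [[]|->]. Qed.
Lemma inl_eq (A B : eqType) (x y : A) : (@inl A B x == inl y) = (x == y).
Proof. by apply/eqP/eqP => [[]|->]. Qed.
Lemma clause_arith m v w r D : 3 <= m -> v <= 3 -> w <= v -> (0 < r \/ w <= 2) ->
  D <= 4 * v + w + 3 * r -> (2 * m+1) * D <= 10 + 10 * m * (v+r) /\
  ((2 * m+1) * D = 10 + 10 * m * (v+r) -> r = 0 /\ v = 2 /\ D = 10).
Proof.
move=> hm hv hw hr hD.
have h1 : m * D <= m * (4 * v + w + 3 * r) by rewrite leq_mul2l hD orbT.
have h2 : 3 * r <= m * r by rewrite leq_mul2r hm orbT.
have : v = 0 \/ v = 1 \/ v = 2 \/ v = 3 by lia.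
have : w = 0 \/ w = 1 \/ w = 2 \/ w = 3 by lia.
move=> Hw Hv; case: Hw => [?|[?|[?|?]]]; case: Hv => [?|[?|[?|?]]]; subst;
  split; lia.
Qed.

Lemma cycle_closed (T : finType) (s : seq T) (P : pred T) : uniq s ->
  (forall x, x \in s -> P x -> P (next s x)) ->
  forall x y, x \in s -> y \in s -> P x -> P y.
Proof.
move=> us cl x y xs ys Px.
have := connect_cycle (cycle_next us) xs ys.
case/connectP => q pq ->.
elim: q x xs Px pq => [|z q IH] x xs Px //= /andP [/eqP <- pq].
by apply: IH => //; [rewrite mem_next | exact: cl].
Qed.

Lemma sum_eq_le (I : finType) (a b : I -> nat) :
  (forall i, a i <= b i) -> \sum_i b i <= \sum_i a i -> forall i, a i = b i.
Proof.
move=> le sl i; apply/eqP; rewrite eqn_leq le /= leqNgt; apply/negP => lt.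
have : \sum_i a i < \sum_i b i.
  rewrite (bigD1 i) //= [X in _ < X](bigD1 i) //= -addSn.
  by apply: leq_add => //; apply: leq_sum.
by rewrite ltnNge sl.
Qed.

Lemma some_eq (A : eqType) (x y : A) : (Some x == Some y) = (x == y).
Proof. by apply/eqP/eqP => [[]|->]. Qed.

Lemma handshake (T : finType) (e : rel T) : irreflexive e -> symmetric e ->
  2 * nedges e <= \sum_x #|[set y | e x y]|.
Proof.
move=> irr sym.
have -> : \sum_x #|[set y | e x y]| = \sum_x \sum_(y | e x y) 1.
  by apply: eq_bigr => x _; rewrite -sum1_card; apply: eq_bigl => y; rewrite inE.
rewrite pair_big_dep /=.
set E := [set S : {set T} | [exists x, exists y, e x y && (S == [set x; y])]].
rewrite (partition_big (fun q : T * T => [set q.1; q.2]) (mem E)) /=; last first.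
  move=> [x y] /= exy; rewrite inE; apply/existsP; exists x; apply/existsP; exists y.
  by rewrite exy eqxx.
rewrite /nedges -/E -sum1_card big_distrr /=.
apply: leq_sum => S; rewrite inE => /existsP [x /existsP [y /andP [exy /eqP ->]]].
have nxy : (x, y) != (y, x).
  apply/negP => /eqP [E1 _]; by rewrite E1 irr in exy.
rewrite (bigD1 (x, y)) /=; last by rewrite exy eqxx.
rewrite (bigD1 (y, x)) /=; last by rewrite sym exy setUC eqxx eq_sym nxy.
by rewrite muln1 addnA leq_addr.
Qed.

Section S.
Variables (p m : nat) (C : 'I_m -> {set 'I_p}) (ord : 'I_p -> seq 'I_m).
Hypothesis hord_uniq : forall i, uniq (ord i).
Notation raw := (raw_vertex p m).
Notation V := (Gvertex C).
Notation eG := (@Gadj p m C ord).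
Definition rA : raw := inl (inl tt).
Definition rU j : raw := inl (inr j).
Definition rV i j : raw := inr ((i,j), k0).
Definition rS i j : raw := inr ((i,j), k1).
Definition rT i j : raw := inr ((i,j), k2).

Definition cand (r : raw) : seq raw :=
  match r with
  | inl (inl _) => [::]
  | inl (inr j) => [seq rV i j | i <- enum (C j)]
  | inr ((i,j),k) => match nat_of_ord k with
     | 0 => [:: rT i j; rU j; rS i j; rS i (prev (ord i) j)]
     | 1 => [:: rV i j; rV i (next (ord i) j)]
     | _ => [:: rA; rV i j] end
  end.

Lemma nbr (g h : V) : eG g h -> val g != rA -> val h \in cand (val g).
Proof.
case: g h => [[[[]|j]|[[i j] [[|[|[|//]]] Hk]]] vg] [[[[]|j']|[[i' j'] [[|[|[|//]]] Hk']]] vh];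
  rewrite /Gadj /= ?orbF ?andbF //= => E _;
  rewrite /rV /rS /rT /rU /rA /= ?inE /=.
all: rewrite ?inr_eq ?inl_eq ?xpair_eqE /= in E *.
- move/eqP: E => E; rewrite E in vh *; apply/mapP; exists i'; rewrite ?mem_enum //; congr inr; congr pair; exact: val_inj.
- by rewrite inr_eq eq_sym E.
- case/orP: E => /andP[/eqP E1 /eqP E2]; subst.
    by rewrite !eqxx.
  by rewrite prev_next // !eqxx ?orbT.
- by case/andP: E => /eqP E1 /eqP E2; subst; rewrite !eqxx.
- case/orP: E => /andP[/eqP E1 /eqP E2]; subst.
    by apply/orP; right; rewrite !eqxx.
  by rewrite !eqxx.
- by case/andP: E => /eqP E1 /eqP E2; subst; rewrite !eqxx.
Qed.
Lemma nbrA (g h : V) : eG g h -> val g = rA -> exists i j, val h = rT i j.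
Proof.
case: g h => [[[[]|j]|[[i j] [[|[|[|//]]] Hk]]] vg] [[[[]|j']|[[i' j'] [[|[|[|//]]] Hk']]] vh];
  rewrite /Gadj /= ?orbF ?andbF //= => E H; try discriminate H.
all: by exists i', j'; rewrite /rT; congr inr; congr pair; exact: val_inj.
Qed.

Lemma count_sub (T : finType) (A : {set T}) (s : seq T) :
  {subset A <= s} -> #|A| <= count (mem A) s.
Proof.
move=> sub; rewrite -size_filter.
apply: leq_trans (card_size _).
apply: subset_leq_card; apply/subsetP => x xA.
by rewrite mem_filter /= xA sub.
Qed.

Hypothesis hC : forall j : 'I_m, #|C j| = 3.

Lemma size_cand r : r != rA -> size (cand r) <= 4.
Proof.
case: r => [[[]|j]|[[i j] [[|[|[|//]]] Hk]]] //= _.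
by rewrite size_map -cardE hC.
Qed.

Definition clr (r : raw) : option 'I_m :=
  match r with inl (inl _) => None | inl (inr j) => Some j | inr (q, _) => Some q.2 end.

Lemma clr_None r : (clr r == None) = (r == rA).
Proof. by case: r => [[[]|j]|[[i j] k]]. Qed.

Section H.
Variables (VH : finType) (eH : rel VH) (phi : VH -> V) (rho : VH -> VH -> option V).
Hypothesis eH_sym : symmetric eH.
Hypothesis eH_irr : irreflexive eH.
Hypothesis phi_inj : injective phi.
Hypothesis Hrho : forall x y, eH x y ->
       rho x y = rho y x /\
       match rho x y with
       | None => eG (phi x) (phi y)
       | Some w => [/\ eG (phi x) w, eG w (phi y) & forall v, phi v != w]
       end.
Hypothesis Huniq : forall x y x' y' w, eH x y -> eH x' y' ->
       rho x y = Some w -> rho x' y' = Some w ->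
       (x = x' /\ y = y') \/ (x = y' /\ y = x').

Definition f x y : V := if rho x y is Some w then w else phi y.
Definition Nb x := [set y | eH x y].
Definition NU x : {set raw} := [set val (f x y) | y in Nb x].
Definition d x := #|Nb x|.

Lemma f_adj x y : eH x y -> eG (phi x) (f x y).
Proof. by move=> /Hrho[_]; rewrite /f; case: (rho x y) => [w [] |]. Qed.

Lemma f_inj x : {in Nb x &, injective (fun y => val (f x y))}.
Proof.
move=> y y'; rewrite !inE => hy hy' /val_inj.
have [_ Hy] := Hrho hy; have [_ Hy'] := Hrho hy'.
rewrite /f; move: Hy Hy'.
case Ey: (rho x y) => [w|]; case Ey': (rho x y') => [w'|].
- move=> _ _ E; subst w'.
  case: (Huniq hy hy' Ey Ey') => [[_ ->] //| [E1 E2]]; subst.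
  by rewrite eH_irr in hy.
- by move=> [_ _ H] _ E; move: (H y'); rewrite E eqxx.
- by move=> _ [_ _ H] E; move: (H y); rewrite E eqxx.
- by move=> _ _ /phi_inj.
Qed.

Lemma dE x : d x = #|NU x|.
Proof. by rewrite /NU card_in_imset //; exact: f_inj. Qed.

Lemma notimg_rho x y : eH x y -> (forall v, phi v != f x y) -> rho x y = Some (f x y).
Proof.
move=> _; rewrite /f; case: (rho x y) => // /(_ y); by rewrite eqxx.
Qed.

Lemma mid_adj x y w : eH x y -> rho x y = Some w -> eG w (phi y).
Proof. by move=> /Hrho[_]; move=> + E; rewrite E => -[]. Qed.

Lemma phi_ne x y : eH x y -> val (phi y) != val (phi x).
Proof.
move=> hy; apply/negP => /eqP /val_inj /phi_inj E; subst.
by rewrite eH_irr in hy.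
Qed.

Lemma NU_sub x : val (phi x) != rA -> {subset NU x <= cand (val (phi x))}.
Proof.
move=> ne r /imsetP [y]; rewrite inE => hy ->.
by apply: nbr => //; exact: f_adj.
Qed.

Lemma d_cnt x : val (phi x) != rA -> d x <= count (mem (NU x)) (cand (val (phi x))).
Proof. by move=> ne; rewrite dE; apply: count_sub; exact: NU_sub. Qed.

Lemma d_le4 x : val (phi x) != rA -> d x <= 4.
Proof.
move=> ne; apply: leq_trans (d_cnt ne) _.
by apply: leq_trans (count_size _ _) (size_cand ne).
Qed.


Definition Ax (Ua : {set raw}) x : bool :=
  match val (phi x) with
  | inr ((i,j),k) => (rT i j \in Ua) &&
      ((nat_of_ord k == 2) || ((nat_of_ord k == 0) && ~~ [exists y, val (phi y) == rT i j]))
  | _ => false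
  end.

Lemma a_bound xa : val (phi xa) = rA -> d xa <= #|[set x | Ax (NU xa) x]|.
Proof.
move=> Ha; rewrite dE.
pose g x := match val (phi x) with inr ((i,j),_) => rT i j | r => r end.
apply: leq_trans (leq_imset_card g _).
apply: subset_leq_card; apply/subsetP => r /imsetP [y]; rewrite inE => hy ->.
have hxy := f_adj hy.
have [i [j E]] := nbrA hxy Ha.
have rN : rT i j \in NU xa by apply/imsetP; exists y; rewrite ?inE // E.
case: (boolP [exists x, val (phi x) == rT i j]) => [/existsP [x /eqP Ex] | nex].
  apply/imsetP; exists x; last by rewrite /g Ex.
  by rewrite inE /Ax Ex /= rN.
have nimg : forall v, phi v != f xa y.
  move=> v; apply/negP => /eqP Ev; move/negP: nex; apply; apply/existsP; exists v.
  by rewrite Ev E.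
have Er := notimg_rho hy nimg.
have hm := mid_adj hy Er.
have hc : val (phi y) \in cand (val (f xa y)) by apply: nbr => //; rewrite E.
have hne := phi_ne hy.
rewrite E /= !inE Ha in hc hne.
case/orP: hc => /eqP Ey; first by rewrite Ey eqxx in hne.
have Ey2 : val (phi y) = rV i j := Ey.
apply/imsetP; exists y; last by rewrite E /g Ey2.
by rewrite inE /Ax Ey2 /= rN /= nex.
Qed.

Lemma Ax_le1 Ua x : Ax Ua x <= 1.
Proof. by case: (Ax Ua x). Qed.

Lemma v_bound x i j : val (phi x) = rV i j ->
  d x <= (rT i j \in NU x) + (rU j \in NU x) + (rS i j \in NU x)
          + (rS i (prev (ord i) j) \in NU x).
Proof.
move=> E; have ne : val (phi x) != rA by rewrite E.
have := d_cnt ne; rewrite E /= !addnA addn0 => H.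
exact: H.
Qed.

Definition Vl j : seq raw := [seq rV i j | i <- enum (C j)].
Definition X j := [set x | clr (val (phi x)) == Some j].
Definition Xv j := [set x | val (phi x) \in Vl j].
Definition Xr j := X j :\: Xv j.

Lemma Xv_of x j : x \in Xv j -> exists2 i, i \in C j & val (phi x) = rV i j.
Proof. by rewrite inE => /mapP [i]; rewrite mem_enum => hi ->; exists i. Qed.

Lemma Xv_sub j : Xv j \subset X j.
Proof.
by apply/subsetP => x /Xv_of [i _ E]; rewrite inE E.
Qed.

Lemma Xv_card j : #|Xv j| <= 3.
Proof.
rewrite -(card_in_imset (f := fun x => val (phi x))); last first.
  by move=> x y _ _ /val_inj /phi_inj.
apply: leq_trans (count_sub (s := Vl j) _) _.
  by move=> r /imsetP [x]; rewrite inE => hx ->.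
by apply: leq_trans (count_size _ _) _; rewrite size_map -cardE hC.
Qed.

Lemma Xv_bound Ua x j : x \in Xv j -> d x + Ax Ua x <= 4 + (rU j \in NU x).
Proof.
case/Xv_of => i _ E; have := v_bound E; have := Ax_le1 Ua x.
case: (rT i j \in NU x); case: (rS i j \in NU x); case: (rS i (prev (ord i) j) \in NU x);
 case: (rU j \in NU x) => /=; lia.
Qed.

Lemma Xr_bound Ua x j : x \in Xr j -> d x + Ax Ua x <= 3.
Proof.
rewrite !inE => /andP [nv cx].
have ne : val (phi x) != rA by rewrite -clr_None (eqP cx).
have := d_cnt ne; have := valP (phi x); move: nv cx ne; rewrite /Ax.
case: (val (phi x)) => [[[]|j']|[[i j'] [[|[|[|//]]] Hk]]] //= nv cx ne vx.
- move=> H; rewrite addn0; apply: leq_trans H _.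
  by apply: leq_trans (count_size _ _) _; rewrite size_map -cardE hC.
- case/negP: nv; move/eqP: cx => [<-]; apply/mapP; exists i; first by rewrite mem_enum.
  by rewrite /rV; congr inr; congr pair; exact: val_inj.
- move=> H; rewrite andbF addn0; apply: leq_trans H _.
  by case: (_ \in _); case: (_ \in _).
- move=> H; rewrite andbT.
  by move: H; case: (_ \in _); case: (_ \in _); case: (_ \in _) => /=; lia.
Qed.

Lemma W_bound j : (forall x, val (phi x) != rU j) ->
  #|[set x in Xv j | rU j \in NU x]| <= 2.
Proof.
move=> nimg.
case: (set_0Vmem [set x in Xv j | rU j \in NU x]) => [-> | [x1]]; first by rewrite cards0.
rewrite !inE => /andP [_ /imsetP [y1]]; rewrite inE => hy1 E1.
have ni1 : forall v, phi v != f x1 y1.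
  by move=> v; apply/negP => /eqP Ev; move: (nimg v); rewrite Ev E1 eqxx.
have R1 := notimg_rho hy1 ni1.
apply: leq_trans (_ : #|[set x1; y1]| <= 2); last by rewrite cards2; case: (_ != _).
apply: subset_leq_card; apply/subsetP => x; rewrite !inE => /andP [_ /imsetP [y]].
rewrite inE => hy E.
have ni : forall v, phi v != f x y.
  by move=> v; apply/negP => /eqP Ev; move: (nimg v); rewrite Ev E eqxx.
have R := notimg_rho hy ni.
have Ef : f x y = f x1 y1 by apply: val_inj; rewrite -E -E1.
rewrite Ef in R.
by case: (Huniq hy hy1 R R1) => [[-> _] | [-> _]]; rewrite eqxx ?orbT.
Qed.

Lemma Xr_pos j : (exists x, val (phi x) = rU j) -> 0 < #|Xr j|.
Proof.
case=> x E; apply/card_gt0P; exists x; rewrite !inE E eqxx andbT.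
by apply/mapP => -[i _].
Qed.

Lemma v_full x i j : val (phi x) = rV i j -> 4 <= d x -> rS i j \in NU x.
Proof.
move=> E; have := v_bound E.
case: (rT i j \in NU x); case: (rS i j \in NU x); case: (rS i (prev (ord i) j) \in NU x);
 case: (rU j \in NU x) => //=; lia.
Qed.

Lemma s_next x i j : val (phi x) = rV i j -> rS i j \in NU x ->
  (forall z, val (phi z) != rS i j) -> exists y, val (phi y) = rV i (next (ord i) j).
Proof.
move=> Ex /imsetP [y]; rewrite inE => hy E nimg.
have ni : forall v, phi v != f x y.
  by move=> v; apply/negP => /eqP Ev; move: (nimg v); rewrite Ev E eqxx.
have R := notimg_rho hy ni.
have hm := mid_adj hy R.
have hc : val (phi y) \in cand (val (f x y)) by apply: nbr => //; rewrite -E.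
have hne := phi_ne hy.
rewrite -E /= !inE Ex in hc hne.
case/orP: hc => /eqP Ey; first by rewrite Ey eqxx in hne.
by exists y.
Qed.


Definition D Ua j := \sum_(x in X j) (d x + Ax Ua x).

Lemma D_split Ua j : D Ua j = \sum_(x in Xv j) (d x + Ax Ua x) + \sum_(x in Xr j) (d x + Ax Ua x).
Proof.
rewrite /D (big_setID (Xv j)) /=; congr (_ + _).
by apply: eq_bigl => x; rewrite (setIidPr (Xv_sub j)).
Qed.

Lemma X_card j : #|X j| = #|Xv j| + #|Xr j|.
Proof. by rewrite -(cardsID (Xv j) (X j)) (setIidPr (Xv_sub j)). Qed.

Lemma sum_ind (A : {set VH}) (P : pred VH) :
  \sum_(x in A) (P x : nat) = #|[set x in A | P x]|.
Proof.
rewrite -sum1_card big_mkcond /= [RHS]big_mkcond /=.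
by apply: eq_bigr => x _; rewrite !inE; case: (x \in A); case: (P x).
Qed.

Lemma clause_bound Ua j : 3 <= m ->
  (2 * m+1) * D Ua j <= 10 + 10 * m * #|X j| /\
  ((2 * m+1) * D Ua j = 10 + 10 * m * #|X j| -> #|Xr j| = 0 /\ #|Xv j| = 2 /\ D Ua j = 10).
Proof.
move=> hm.
have h1 : \sum_(x in Xv j) (d x + Ax Ua x) <= 4 * #|Xv j| + #|[set x in Xv j | rU j \in NU x]|.
  apply: leq_trans (_ : \sum_(x in Xv j) (4 + (rU j \in NU x)) <= _).
    by apply: leq_sum => x hx; exact: Xv_bound.
  by rewrite big_split /= sum_nat_const sum_ind mulnC.
have h2 : \sum_(x in Xr j) (d x + Ax Ua x) <= 3 * #|Xr j|.
  apply: leq_trans (_ : \sum_(x in Xr j) 3 <= _); last by rewrite sum_nat_const mulnC.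
  apply: leq_sum => x hx. exact: (Xr_bound Ua hx).
have hw : #|[set x in Xv j | rU j \in NU x]| <= #|Xv j|.
  by apply: subset_leq_card; apply/subsetP => x; rewrite inE => /andP [].
have hr : 0 < #|Xr j| \/ #|[set x in Xv j | rU j \in NU x]| <= 2.
  case: (boolP [exists x, val (phi x) == rU j]) => [/existsP [x /eqP E]|ne].
    by left; apply: Xr_pos; exists x.
  right; apply: W_bound => x; apply/negP => /eqP E; move/negP: ne; apply.
  by apply/existsP; exists x; rewrite E.
have := clause_arith hm (Xv_card j) hw hr (_ : D Ua j <= _).
rewrite X_card; apply.
by rewrite D_split; apply: leq_add.
Qed.

Definition Bv i j := [exists x, val (phi x) == rV i j].

Lemma clause_struct Ua j : #|Xr j| = 0 -> #|Xv j| = 2 -> D Ua j = 10 ->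
  forall i, i \in C j -> Bv i j -> Bv i (next (ord i) j).
Proof.
move=> hr hv hD i hi /existsP [x /eqP Ex].
have xv : x \in Xv j by rewrite inE Ex; apply/mapP; exists i; rewrite ?mem_enum.
have hD' : D Ua j = \sum_(y in Xv j) (d y + Ax Ua y).
  rewrite D_split; move/eqP: hr; rewrite cards_eq0 => /eqP ->.
  by rewrite big_set0 addn0.
have h4 : 4 <= d x.
  have : 10 <= (d x + Ax Ua x) + 5.
    rewrite -hD hD' (bigD1 x) //=; apply: leq_add => //.
    apply: leq_trans (_ : \sum_(y in Xv j | y != x) 5 <= _).
      by apply: leq_sum => y /andP [hy _]; apply: leq_trans (Xv_bound Ua hy) _; case: (_ \in _).
    rewrite sum_nat_const.
    have : #|[pred y in Xv j | y != x]| = 1.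
      by move: hv; rewrite (cardD1 x) xv => -[<-]; apply: eq_card => y; rewrite !inE andbC.
    by move=> ->.
  by have := Ax_le1 Ua x; lia.
have hs := v_full Ex h4.
have nimg : forall z, val (phi z) != rS i j.
  move=> z; apply/negP => /eqP Ez.
  have : z \in Xr j.
    rewrite !inE Ez eqxx andbT; apply/mapP => -[i' _] //.
  by move=> hz; move: hr; rewrite (cardD1 z) hz.
have [y Ey] := s_next Ex hs nimg.
by apply/existsP; exists y; rewrite Ey.
Qed.


Lemma main_H (hmem : forall i j, (j \in ord i) = (i \in C j)) (hm : 3 <= m)
  (hN : 0 < #|VH|) (hdens : 5 * m * #|VH| <= nedges eH * (2 * m + 1)) :
  exists alpha : 'I_p -> bool, forall j, #|[set i in C j | alpha i]| = 1.
Proof.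
have hs : 2 * nedges eH <= \sum_x d x := handshake eH_irr eH_sym.
case: (boolP [exists x, val (phi x) == rA]) => [/existsP [xa /eqP Ha] | na]; last first.
  exfalso.
  have h4 : \sum_x d x <= \sum_(x : VH) 4.
    apply: leq_sum => x _; apply: d_le4; apply/negP => /eqP E.
    by move/negP: na; apply; apply/existsP; exists x; rewrite E.
  rewrite sum_nat_const in h4.
  have h4' : \sum_x d x <= #|VH| * 4 by apply: leq_trans h4 _; exact: leqnn.
  have h5 : nedges eH * (2 * m + 1) <= (2 * #|VH|) * (2 * m + 1).
    by rewrite leq_mul2r; apply/orP; right; lia.
  have h6 : 3 * #|VH| <= m * #|VH| by rewrite leq_mul2r hm orbT.
  lia.
pose Ua := NU xa.
have hA : \sum_x d x <= \sum_(x | x != xa) (d x + Ax Ua x).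
  rewrite (bigD1 xa) //= big_split /= addnC leq_add2l.
  apply: leq_trans (a_bound Ha) _.
  rewrite -sum1_card big_mkcond [X in _ <= X]big_mkcond /=.
  apply: leq_sum => x _; rewrite inE.
  case: (eqVneq x xa) => [->|] //=.
  by rewrite /Ax Ha.
have j0 : 'I_m by apply: (@Ordinal m 0); lia.
have hpart : forall F : VH -> nat, \sum_(x | x != xa) F x = \sum_j \sum_(x in X j) F x.
  move=> F.
  rewrite (partition_big (fun x => odflt j0 (clr (val (phi x)))) xpredT) //=.
  apply: eq_bigr => j _; apply: eq_bigl => x; rewrite inE.
  case: (eqVneq x xa) => [->|nx] /=; first by rewrite Ha.
  have : val (phi x) != rA.
    by apply/negP => /eqP E; move: nx; rewrite -Ha in E; move/val_inj/phi_inj: E ->; rewrite eqxx.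
  rewrite -clr_None; case: (clr (val (phi x))) => // j' _ /=.
have hN1 : #|VH| = 1 + \sum_j #|X j|.
  rewrite -sum1_card (bigD1 xa) //= hpart; congr (_ + _).
  by apply: eq_bigr => j _; rewrite sum1_card.
have hlow : 10 * m + \sum_j 10 * m * #|X j| <= \sum_j (2 * m + 1) * D Ua j.
  rewrite -big_distrr /= -[X in X + _]muln1 -mulnDr -hN1 -big_distrr /=.
  have := hpart (fun x => d x + Ax Ua x); rewrite /D => <-.
  apply: leq_trans (_ : (2 * m + 1) * (2 * nedges eH) <= _); last first.
    by rewrite leq_mul2l (leq_trans hs hA) orbT.
  have e1 : 10 * m * #|VH| = 2 * (5 * m * #|VH|) by rewrite !mulnA.
  have e2 : (2 * m + 1) * (2 * nedges eH) = 2 * (nedges eH * (2 * m + 1)).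
    by rewrite mulnCA [_ * nedges eH]mulnC.
  by rewrite e1 e2 leq_mul2l hdens orbT.
have hup : forall j, (2 * m + 1) * D Ua j <= 10 + 10 * m * #|X j|.
  by move=> j; case: (clause_bound Ua j hm).
have heq : forall j, (2 * m + 1) * D Ua j = 10 + 10 * m * #|X j|.
  apply: sum_eq_le => //.
  rewrite big_split /= sum_nat_const card_ord.
  by rewrite mulnC.
have hcl : forall i j, i \in C j -> Bv i j -> Bv i (next (ord i) j).
  move=> i j; have [hr [hv hD]] := (clause_bound Ua j hm).2 (heq j).
  exact: clause_struct hr hv hD i.
have cyc : forall i j j', i \in C j -> i \in C j' -> Bv i j -> Bv i j'.
  move=> i j j' hj hj'.
  apply: (@cycle_closed _ (ord i) (fun j => Bv i j)); rewrite ?hmem //.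
  by move=> x; rewrite hmem; exact: hcl.
exists (fun i => [exists j, (i \in C j) && ~~ Bv i j]) => j.
have [hr [hv hD]] := (clause_bound Ua j hm).2 (heq j).
have -> : [set i in C j | [exists j, (i \in C j) && ~~ Bv i j]] = C j :\: [set i | Bv i j].
  apply/setP => i; rewrite !inE; case hi: (i \in C j); rewrite /= ?andbT ?andbF //.
  apply/existsP/idP => [[j' /andP [hij' nb]] | nb]; last by exists j; rewrite hi.
  by apply/negP => b; move: nb; rewrite (cyc i j j' hi hij' b).
have hB : #|C j :&: [set i | Bv i j]| = 2.
  rewrite -hv.
  rewrite -(card_in_imset (f := fun i => rV i j)); last first.
    by move=> i i' _ _ [].
  rewrite -(card_in_imset (f := fun x => val (phi x)) (D := Xv j)); last first.
    by move=> x y _ _ /val_inj /phi_inj.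
  apply: eq_card => r; apply/imsetP/imsetP.
    move=> [i]; rewrite !inE => /andP [hi /existsP [x /eqP Ex]] ->.
    exists x => //; rewrite inE Ex; apply/mapP; exists i; rewrite ?mem_enum //.
  move=> [x hx ->]; have [i hi Ex] := Xv_of hx.
  exists i; last by rewrite Ex.
  by rewrite !inE hi /=; apply/existsP; exists x; rewrite Ex.
have := cardsID [set i | Bv i j] (C j).
rewrite hB hC => /eqP; rewrite -[3]/(2 + 1) eqn_add2l => /eqP H; exact: H.
Qed.
End H.
End S.

Lemma dens_conv (m ne n : nat) : 0 < m ->
  (((5 * m)%N)%:R / ((2 * m + 1)%N)%:R <= (ne%:R / n%:R : rat))%R ->
  0 < n /\ 5 * m * n <= ne * (2 * m + 1).
Proof.
move=> m0 H.
have n0 : 0 < n.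
  case: n H => // H; rewrite invr0 mulr0 in H.
  move: H; rewrite ler_pdivrMr ?ltr0n ?addn1 // mul0r leNgt ltr0n muln_gt0 m0.
  by case: m m0.
split => //.
move: H; rewrite ler_pdivlMr ?ltr0n ?addn1 // mulrAC ler_pdivrMr ?ltr0n //.
by rewrite -!natrM ler_nat -addn1.
Qed.

Theorem lemma3 (p m : nat) (C : 'I_m -> {set 'I_p})
    (ord : 'I_p -> seq 'I_m)
    (hC : forall j : 'I_m, #|C j| = 3)
    (hdeg : forall i : 'I_p, 3 <= #|[set j : 'I_m | i \in C j]|)
    (hord_uniq : forall i : 'I_p, uniq (ord i))
    (hord_mem : forall (i : 'I_p) (j : 'I_m), (j \in ord i) = (i \in C j)) :
  (exists (VH : finType) (eH : rel VH),
      simple_graph eH /\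
      half_shallow_top_minor eH (@Gadj p m C ord) /\
      (((5 * m)%N)%:R / ((2 * m + 1)%N)%:R <= density eH)%R) ->
  exists alpha : 'I_p -> bool,
    forall j : 'I_m, #|[set i in C j | alpha i]| = 1.
Proof.
move=> [VH [eH [[esym eirr] [[phi [rho [inj [H1 H2]]]] hd]]]].
case: (posnP m) => [m0 | mpos].
  exists (fun _ => false) => -[j hj]; exfalso; move: hj; by rewrite m0.
have hm : 3 <= m.
  pose j0 : 'I_m := Ordinal mpos.
  have : 0 < #|C j0| by rewrite hC.
  case/card_gt0P => i hi.
  apply: leq_trans (hdeg i) _.
  by apply: leq_trans (max_card _) _; rewrite card_ord.
rewrite /density in hd.
have [hN hdens] := dens_conv mpos hd.
exact: (main_H hord_uniq hC esym eirr inj H1 H2 hord_mem hm hN hdens).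
Qed.
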